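(* Let $d_1,\dots,d_n$ be positive integers and let $a_1,\dots,a_n\in\mathbb{F}_q^*$. Let $$N_0^*=\#\{(x_1,\dots,x_n)\in(\mathbb{F}_q^* )^n : a_1x_1^{d_1}+\cdots+a_nx_n^{d_n}=0\}.$$ Then $$\left|N_0^*-\frac1q(q-1)^n\right|\le\frac{q-1}{q}+\sum_{e=0}^{n-1}\ \sum_{1\le i_{e+1}<\cdots<i_n\le n}\ \sum_{\substack{1\le l_{i_j}\le d_{i_j}-1\ (e+1\le j\le n)\\ \frac{l_{i_{e+1}}}{d_{i_{e+1}}}+\cdots+\frac{l_{i_n}}{d_{i_n}}\in\mathbb{Z}}}(q-1)\,q^{\frac{n-e}{2}-1},$$ where the innermost sum counts tuples $(l_{i_{e+1}},\dots,l_{i_n})$ of integers with the indicated properties. *)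

(* Defs.v *)
From HB Require Import structures.
From mathcomp Require Import all_boot all_order all_algebra.
Set Implicit Arguments. Unset Strict Implicit. Unset Printing Implicit Defensive.
Import Order.TTheory GRing.Theory Num.Theory.
Local Open Scope ring_scope.

Definition Nstar0 (F : finFieldType) (n : nat) (d : 'I_n -> nat) (a : 'I_n -> F)
  : nat :=
  #|[set x : {ffun 'I_n -> F} |
      [forall i, x i != 0] & \sum_(i < n) a i * x i ^+ d i == 0]|.

(* A tuple is encoded as a dependent
   finite function l with l i : 'I_(d i) (so l i <= d i - 1), l i >= 1 on S
   and l i = 0 off S. *)
Definition lcount (n : nat) (d : 'I_n -> nat) (S : {set 'I_n}) : nat :=
  #|[set l : {dffun forall i : 'I_n, 'I_(d i)} |
      [forall i, (i \in S) ==> (0 < (l i : nat))%N] &&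
      [forall i, (i \notin S) ==> ((l i : nat) == 0%N)] &&
      ((\sum_(i in S) ((l i : nat)%:Q / (d i)%:Q)) \is a Num.int)]|.

(* Main.v *)
Require Import Defs.
From HB Require Import structures.
From mathcomp Require Import all_boot all_order all_algebra.
From mathcomp Require Import all_fingroup all_solvable all_field.
From mathcomp.real_closed Require Import complex.
From mathcomp Require Import ring.
Import Order.TTheory GRing.Theory Num.Theory.
Local Open Scope ring_scope.

Lemma fin_prim_root (F : finFieldType) : exists g : F, (#|F|.-1).-primitive_root g.
Proof.
have q1 := finNzRing_gt1 F.
have m0 : (0 < #|F|.-1)%N by rewrite -ltnS prednK // ltnW.
pose rs := enum [pred x : F | x != 0].
have : has (#|F|.-1).-primitive_root rs.
  apply: has_prim_root => //.
  - apply/allP=> x; rewrite mem_enum inE => nz.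
    rewrite unity_rootE; apply/eqP.
    apply: (mulfI nz); rewrite -exprS prednK ?expf_card ?mulr1 //; exact: ltnW.
  - exact: enum_uniq.
  - by rewrite -cardE cardC1.
by case/hasP=> g _ pg; exists g.
Qed.

Section AddChar.
Variable F : finFieldType.
Lemma add_hom_ex : exists p : nat, exists f : F -> 'F_p, prime p /\ (forall x y, f (x + y) = f x + f y) /\ f 1 != 0.
Proof.
have [p pr pF] := finPcharP F.
exists p.
pose V := pPrimeCharType pF.
have : exists i, coord (vbasis (fullv : {vspace V})) i (1 : V) != 0.
  apply/existsP; apply: contraT; rewrite negb_exists => /forallP H.
  have := coord_vbasis (memvf (1 : V)).
  rewrite big1 => [/eqP|i _]; first by rewrite oner_eq0.
  by move/negbNE/eqP: (H i) => ->; rewrite scale0r.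
case=> i Hi; exists (coord (vbasis (fullv : {vspace V})) i); split => //; split => //.
move=> x y; exact: raddfD.
Qed.
End AddChar.
Lemma C_prim_root_ex (C : numClosedFieldType) n : (n > 0)%N -> exists z : C, n.-primitive_root z.
Proof.
pose p : {poly C} := 'X^n - 1; have [r Dp] := closed_field_poly_normal p.
move=> n_gt0; rewrite (monicP _) ?monicXnsubC // scale1r in Dp.
have rn1: all n.-unity_root r by apply/allP=> z; rewrite -root_prod_XsubC -Dp.
have sz_r: (n < (size r).+1)%N.
  by rewrite -(size_prod_XsubC r id) -Dp size_XnsubC.
have [|z] := hasP (has_prim_root n_gt0 rn1 _ sz_r); last by exists z.
by rewrite -separable_prod_XsubC -Dp separable_Xn_sub_1 // pnatr_eq0 -lt0n.
Qed.

Lemma prim_norm1 (C : numClosedFieldType) n (z : C) : n.-primitive_root z -> `|z| = 1.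
Proof.
move=> pz; have n0 := prim_order_gt0 pz.
have := prim_expr_order pz => /(congr1 (fun x => `|x|)).
rewrite normrX normr1 => /eqP; rewrite pexpr_eq1 ?normr_ge0 //.
by move/eqP.
Qed.

Lemma psi_ex (F : finFieldType) (C : numClosedFieldType) :
  exists psi : F -> C, (forall x y, psi (x + y) = psi x * psi y) /\ psi 1 != 1
    /\ forall x, `|psi x| = 1.
Proof.
have [p [f [pr [fD f1]]]] := add_hom_ex F.
set P := (Zp_trunc (pdiv p)).+2.
have [z pz] := @C_prim_root_ex C P (ltn0Sn (Zp_trunc (pdiv p)).+1).
exists (fun x => z ^+ (f x : nat)); split; [|split].
- move=> x y; rewrite fD -exprD.
  have -> : (((f x + f y)%R : 'F_p) : nat) = (((f x : nat) + f y) %% P)%N by [].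
  by rewrite (prim_expr_mod pz).
- rewrite -(prim_order_dvd pz); apply: contra f1 => H.
  apply/eqP; apply: val_inj => /=.
  have lt : ((f 1%R : nat) < P)%N by exact: ltn_ord.
  move: H lt; case: (f 1%R : nat) => // k H; rewrite ltnNge (dvdn_leq _ H) //.
- by move=> x /=; rewrite normrX (@prim_norm1 _ _ _ pz) expr1n.
Qed.

Section Comb.
Variables (n m : nat) (hm : (0 < m)%N) (d : 'I_n -> nat) (hd : forall i, (0 < d i)%N).

Definition Aset := [set k : {ffun 'I_n -> 'I_m} |
   [forall i, (m %| k i * d i)%N] && (m %| \sum_i (k i : nat))%N].
Definition supp (k : {ffun 'I_n -> 'I_m}) := [set i | (k i : nat) != 0%N].

Lemma ltl (k : {ffun 'I_n -> 'I_m}) i : (k i * d i %/ m < d i)%N.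
Proof. by rewrite ltn_divLR // mulnC ltn_pmul2l. Qed.

Definition lmap (k : {ffun 'I_n -> 'I_m}) : {dffun forall i : 'I_n, 'I_(d i)} :=
  [ffun i => Ordinal (ltl k i)].

Lemma lmapE k i : (lmap k i : nat) = (k i * d i %/ m)%N.
Proof. by rewrite /lmap ffunE. Qed.

Lemma card_AS S : S != set0 ->
  (#|[set k in Aset | supp k == S]| <= lcount d S)%N.
Proof.
move=> SN0.
have inj : {in [set k in Aset | supp k == S] &, injective lmap}.
  move=> k k'; rewrite !inE => /andP[/andP[/forallP Hk _] _] /andP[/andP[/forallP Hk' _] _] E.
  apply/ffunP => i; apply: val_inj => /=.
  have := congr1 (fun l : {dffun forall j : 'I_n, 'I_(d j)} => (l i : nat)) E; rewrite /= !lmapE => E'.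
  apply/eqP; rewrite -(eqn_pmul2r (hd i)); apply/eqP.
  by rewrite -(divnK (Hk i)) -(divnK (Hk' i)) E'.
rewrite -(card_in_imset inj); apply: subset_leq_card; apply/subsetP => l.
case/imsetP => k; rewrite !inE => /andP[/andP[/forallP Hk Hs] /eqP Hsupp] ->.
have Hl i : ((lmap k i : nat) * m = k i * d i)%N by rewrite lmapE divnK.
have Hl0 i : ((lmap k i : nat) == 0%N) = ((k i : nat) == 0%N).
  apply/idP/idP => /eqP H.
    by move: (Hl i); rewrite H mul0n => /esym/eqP; rewrite muln_eq0 (negbTE (lt0n_neq0 (hd i))) orbF.
  by rewrite lmapE H mul0n div0n.
apply/andP; split; first (apply/andP; split).
- apply/forallP => i; apply/implyP; rewrite -Hsupp inE -Hl0 => H.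
  by rewrite lt0n.
- apply/forallP => i; apply/implyP; rewrite -Hsupp inE -Hl0 negbK.
  done.
- have -> : \sum_(i in S) ((lmap k i : nat)%:Q / (d i)%:Q) = (\sum_i (k i : nat))%:R / m%:Q.
    rewrite [LHS](eq_bigr (fun i => (lmap k i : nat)%:R / (d i)%:R)); last by move=> i _; rewrite -!pmulrn.
    rewrite -!pmulrn natr_sum mulr_suml [RHS](bigID (fun i => i \in S)) /=.
    rewrite [X in _ = _ + X]big1 ?addr0; last first.
      move=> i; rewrite -Hsupp inE negbK => /eqP ->; by rewrite mul0r.
    apply: eq_bigr => i _.
    have d0 : ((d i)%:R : rat) != 0 by rewrite pnatr_eq0 -lt0n.
    have m0 : (m%:R : rat) != 0 by rewrite pnatr_eq0 -lt0n.
    have H := congr1 (fun x : nat => (x%:R : rat)) (Hl i); rewrite /= !natrM in H.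
    by apply/eqP; rewrite eqr_div // H.
  case/dvdnP: Hs => t ->; rewrite -!pmulrn natrM mulfK ?pnatr_eq0 -?lt0n //.
Qed.

Lemma sum_cond_e (T : numDomainType) (S : {set 'I_n}) (Y : T) :
  \sum_(e < n) (if #|S| == (n - e)%N then Y else 0) = if S != set0 then Y else 0.
Proof.
have [->|SnE] := eqVneq S set0; rewrite ?eqxx /=.
  by rewrite big1 // => e _; rewrite cards0 eq_sym subn_eq0 leqNgt ltn_ord.
have cS : (0 < #|S|)%N by rewrite card_gt0.
have cSn : (#|S| <= n)%N by rewrite -[X in (_ <= X)%N](card_ord n) max_card.
have e0lt : (n - #|S| < n)%N by rewrite ltn_subrL cS (leq_trans cS cSn).
rewrite (bigD1 (Ordinal e0lt)) //= subKn // eqxx big1 ?addr0 // => e /negP Hne.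
case: ifP => // /eqP H; exfalso; apply: Hne; apply/eqP; apply: val_inj => /=.
by rewrite H subKn // ltnW.
Qed.

Lemma comb_bound (T : numDomainType) (r : T) : 0 <= r ->
  \sum_(k in Aset) r ^+ #|supp k| <=
  1 + \sum_(e < n) \sum_(S : {set 'I_n} | #|S| == (n - e)%N)
        (lcount d S)%:R * r ^+ (n - e).
Proof.
move=> r0.
rewrite (partition_big supp predT) //=.
have inner S : \sum_(k | (k \in Aset) && (supp k == S)) r ^+ #|supp k| =
    #|[set k in Aset | supp k == S]|%:R * r ^+ #|S|.
  rewrite (eq_bigr (fun=> r ^+ #|S|)) => [|k /andP[_ /eqP->]//].
  rewrite sumr_const mulr_natl; congr (_ *+ _).
  by apply: eq_card => k; rewrite [RHS]inE.
under eq_bigr => S _ do rewrite inner.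
rewrite (bigD1 set0) //= cards0 expr0 mulr1.
apply: lerD.
  rewrite -[X in _ <= X]mulr1n ler_nat; apply/card_le1_eqP => k k'; rewrite !inE => /andP[_ /eqP Hk] /andP[_ /eqP Hk'].
  apply/ffunP => i; apply: val_inj => /=.
  have Hz (l : {ffun 'I_n -> 'I_m}) : supp l = set0 -> (l i : nat) = 0%N.
    move=> Hl; apply/eqP; apply: contraT => H; have : i \in supp l by rewrite inE.
    by rewrite Hl inE.
  by rewrite Hz // Hz.
have -> : \sum_(e < n) \sum_(S : {set 'I_n} | #|S| == (n - e)%N) (lcount d S)%:R * r ^+ (n - e)
   = \sum_(S : {set 'I_n} | S != set0) (lcount d S)%:R * r ^+ #|S|.
  rewrite [RHS]big_mkcond /=.
  under [RHS]eq_bigr => S _ do rewrite -sum_cond_e.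
  rewrite exchange_big /=; apply: eq_bigr => e _.
  rewrite big_mkcond /=; apply: eq_bigr => S _.
  by case: eqP => // ->.
apply: ler_sum => S SN0.
apply: ler_wpM2r; first exact: exprn_ge0.
by rewrite ler_nat card_AS.
Qed.
End Comb.

Set Implicit Arguments. Unset Strict Implicit.

Section Chars.
Variables (F : finFieldType) (C : numClosedFieldType).
Local Notation q := #|F|.
Local Notation m := (#|F|.-1).
Variable psi : F -> C.
Hypothesis psiD : forall x y, psi (x + y) = psi x * psi y.
Hypothesis psi1 : psi 1 != 1.
Hypothesis psiN : forall x, `|psi x| = 1.
Variable w : C.
Hypothesis pw : m.-primitive_root w.
Variable g : F.
Hypothesis pg : m.-primitive_root g.

Lemma q_gt1 : (1 < q)%N. Proof. exact: finNzRing_gt1. Qed.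
Lemma m_gt0 : (0 < m)%N. Proof. by rewrite -ltnS prednK ?q_gt1 // ltnW ?q_gt1. Qed.

Lemma psi_neq0 x : psi x != 0.
Proof. by rewrite -normr_eq0 psiN oner_eq0. Qed.

Lemma psi0 : psi 0 = 1.
Proof.
by apply: (mulfI (psi_neq0 0)); rewrite -psiD addr0 mulr1.
Qed.

Lemma sum_psi : \sum_x psi x = 0.
Proof.
have E : \sum_x psi x = \sum_x psi x * psi 1.
  rewrite (reindex_inj (addIr 1)) /=; apply: eq_bigr => x _; exact: psiD.
have : (\sum_x psi x) * (1 - psi 1) = 0 by rewrite mulrBr mulr1 mulr_suml -E subrr.
by move/eqP; rewrite mulf_eq0 subr_eq0 [1 == _]eq_sym (negbTE psi1) orbF => /eqP.
Qed.

Lemma sum_psiM b : \sum_s psi (s * b) = if b == 0 then q%:R else 0.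
Proof.
have [->|bn0] := eqVneq b 0.
  under eq_bigr do rewrite mulr0 psi0.
  by rewrite sumr_const cardT -cardE.
by rewrite -[RHS]sum_psi [RHS](reindex_inj (mulIf bn0)).
Qed.

Lemma sum_psi_nz b : \sum_(s | s != 0) psi (s * b) = (if b == 0 then q%:R else 0) - 1.
Proof. by rewrite -sum_psiM [X in _ = X - _](bigD1 0) //= mul0r psi0 addrC addrK. Qed.

Definition gseq := mkseq (fun i => g ^+ i) m.

Lemma gseq_uniq : uniq gseq.
Proof.
rewrite /gseq /mkseq map_inj_in_uniq ?iota_uniq // => i j; rewrite !mem_iota /= !add0n => Hi Hj /eqP.
by rewrite (eq_prim_root_expr pg) !modn_small // => /eqP.
Qed.

Lemma xm1 (x : F) : x != 0 -> x ^+ m = 1.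
Proof.
move=> nz; apply: (mulfI nz); rewrite -exprS prednK ?expf_card ?mulr1 //.
exact: ltnW q_gt1.
Qed.

Lemma g_neq0 : g != 0.
Proof. by rewrite (prim_root_eq0 pg) -lt0n m_gt0. Qed.

Lemma mem_gseq x : (x \in gseq) = (x != 0).
Proof.
apply/idP/idP.
  by case/mapP => i _ ->; rewrite expf_neq0 // g_neq0.
move=> nz; have [i ->] := prim_rootP pg (xm1 nz).
by apply/mapP; exists (i : nat); rewrite // mem_iota /= add0n ltn_ord.
Qed.

Definition ind (x : F) : nat := index x gseq.

Lemma ind_lt x : x != 0 -> (ind x < m)%N.
Proof. by move=> nz; rewrite -[X in (_ < X)%N](size_mkseq (fun i => g ^+ i) m) index_mem mem_gseq. Qed.

Lemma indK x : x != 0 -> g ^+ ind x = x.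
Proof.
move=> nz; have := nth_index 0 (etrans (mem_gseq x) nz).
by rewrite nth_mkseq ?ind_lt.
Qed.

Lemma ind_exp j : (j < m)%N -> ind (g ^+ j) = j.
Proof.
move=> jm; rewrite /ind -{1}(nth_mkseq 0 (fun i => g ^+ i) jm).
by rewrite index_uniq ?size_mkseq // gseq_uniq.
Qed.

Lemma ind1 : ind 1 = 0%N.
Proof. by rewrite -(expr0 g) ind_exp ?m_gt0. Qed.

Lemma indM x y : x != 0 -> y != 0 -> ind (x * y) = (ind x + ind y) %[mod m].
Proof.
move=> nx ny; apply/eqP; rewrite -(eq_prim_root_expr pg) exprD !indK //.
by rewrite mulf_neq0.
Qed.

Definition chi (k : nat) (x : F) : C := w ^+ (k * ind x).

Lemma chiM k x y : x != 0 -> y != 0 -> chi k (x * y) = chi k x * chi k y.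
Proof.
move=> nx ny; rewrite /chi -exprD -mulnDr; apply/eqP.
rewrite (eq_prim_root_expr pw) -modnMmr indM // modnMmr.
by [].
Qed.

Lemma chi1 k : chi k 1 = 1.
Proof. by rewrite /chi ind1 muln0 expr0. Qed.

Lemma chi_norm k x : `|chi k x| = 1.
Proof. by rewrite /chi normrX (@prim_norm1 _ _ _ pw) expr1n. Qed.

Lemma chi_neq0 k x : chi k x != 0.
Proof. by rewrite -normr_eq0 chi_norm oner_eq0. Qed.

Lemma chiV k x : x != 0 -> chi k x^-1 = (chi k x)^-1.
Proof.
move=> nx; apply: (mulfI (chi_neq0 k x)); rewrite -chiM ?invr_eq0 //.
by rewrite mulfV // divff ?chi_neq0 // chi1.
Qed.

Lemma chi_exp k x e : chi k x ^+ e = chi (k * e) x.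
Proof. by rewrite /chi -exprM mulnAC. Qed.

Lemma chi_prod (I : finType) (P : pred I) (k : I -> nat) x :
  \prod_(i | P i) chi (k i) x = chi (\sum_(i | P i) k i) x.
Proof.
rewrite /chi big_distrl /=.
by rewrite (big_morph (fun e => w ^+ e) (exprD w) (expr0 w)).
Qed.

Lemma sum_nz (h : F -> C) : \sum_(x | x != 0) h x = \sum_(j < m) h (g ^+ j).
Proof.
rewrite -(big_mkord xpredT (fun j => h (g ^+ j))) -(big_map (fun j => g ^+ j) xpredT h).
rewrite -/(mkseq _ _) -/gseq.
rewrite -big_enum /= subn0; apply: perm_big.
apply: uniq_perm; [exact: enum_uniq | exact: gseq_uniq |].
by move=> x; rewrite mem_enum mem_gseq.
Qed.

Lemma geom (u : C) : u ^+ m = 1 -> \sum_(k < m) u ^+ k = if u == 1 then m%:R else 0.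
Proof.
move=> um; have [->|un1] := eqVneq u 1.
  by under eq_bigr do rewrite expr1n; rewrite sumr_const card_ord.
have := subrX1 u m; rewrite um subrr => /esym/eqP.
by rewrite mulf_eq0 subr_eq0 (negbTE un1) => /eqP.
Qed.

Lemma sum_chi k : \sum_(x | x != 0) chi k x = if (m %| k)%N then m%:R else 0.
Proof.
rewrite sum_nz.
rewrite (eq_bigr (fun j : 'I_m => (w ^+ k) ^+ j)); last first.
  by move=> j _; rewrite /chi ind_exp // -exprM.
rewrite geom; last by rewrite -exprM mulnC exprM (prim_expr_order pw) expr1n.
by rewrite -(prim_order_dvd pw).
Qed.

Lemma chiX k x e : x != 0 -> chi k (x ^+ e) = chi (k * e) x.
Proof.
move=> nx; rewrite -chi_exp; elim: e => [|e IH]; first by rewrite !expr0 chi1.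
by rewrite !exprS chiM ?expf_neq0 // IH.
Qed.

Lemma ind_eq0 z : z != 0 -> (ind z == 0%N) = (z == 1).
Proof.
move=> nz; apply/eqP/eqP => [H|->]; last exact: ind1.
by rewrite -(indK nz) H expr0.
Qed.

Lemma m_neq0 : (m%:R : C) != 0.
Proof. by rewrite pnatr_eq0 -lt0n m_gt0. Qed.

Lemma cnt d y : y != 0 ->
  \sum_(x | x != 0) ((x ^+ d == y)%:R : C) = \sum_(k < m | (m %| k * d)%N) (chi k y)^-1.
Proof.
move=> ny.
have key x : x != 0 -> ((x ^+ d == y)%:R : C) =
    m%:R^-1 * \sum_(k < m) chi k (x ^+ d) * (chi k y)^-1.
  move=> nx; set z := x ^+ d / y.
  have nxd : x ^+ d != 0 by rewrite expf_neq0.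
  have nz : z != 0 by rewrite mulf_neq0 ?invr_eq0.
  have E (k : 'I_m) : chi k (x ^+ d) * (chi k y)^-1 = (w ^+ ind z) ^+ k.
    by rewrite -chiV // -chiM ?invr_eq0 // /chi -exprM mulnC.
  under eq_bigr do rewrite E.
  rewrite geom; last by rewrite -exprM mulnC exprM (prim_expr_order pw) expr1n.
  rewrite -(prim_order_dvd pw).
  have zE : (z == 1) = (x ^+ d == y).
    apply/eqP/eqP => [H|H]; last by rewrite /z H divff.
    by rewrite -[y]mul1r -H /z divfK.
  have [H|H] := eqVneq (x ^+ d) y.
    have : ind z == 0%N by rewrite ind_eq0 // zE H.
    by move/eqP->; rewrite dvdn0 mulVf // m_neq0.
  have : ind z != 0%N by rewrite ind_eq0 // zE H.
  move=> iz; have -> : (m %| ind z)%N = false.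
    apply/negP => /dvdn_leq; rewrite lt0n iz => /(_ isT); rewrite leqNgt ind_lt //.
  by rewrite mulr0.
under eq_bigr => x nx do rewrite (key x nx).
rewrite -mulr_sumr exchange_big /= mulr_sumr [RHS]big_mkcond; apply: eq_bigr => k _.
rewrite -mulr_suml.
under eq_bigr => x nx do rewrite chiX //.
rewrite sum_chi; case: ifP => _; last by rewrite mul0r mulr0.
by rewrite mulrA mulVf ?m_neq0 // mul1r.
Qed.

Definition gs (k : nat) : C := \sum_(z | z != 0) (chi k z)^-1 * psi z.

Lemma Gsum d b : b != 0 ->
  \sum_(x | x != 0) psi (b * x ^+ d) = \sum_(k < m | (m %| k * d)%N) chi k b * gs k.
Proof.
move=> nb.
have E x : x != 0 -> psi (b * x ^+ d) = \sum_(y | y != 0) (x ^+ d == y)%:R * psi (b * y).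
  move=> nx; rewrite (bigD1 (x ^+ d)) ?expf_neq0 //= eqxx mul1r big1 ?addr0 // => y /andP[_ hy].
  by rewrite eq_sym (negbTE hy) mul0r.
under eq_bigr => x nx do rewrite (E x nx).
rewrite exchange_big /=.
under eq_bigr => y ny do rewrite -mulr_suml (cnt d ny) mulr_suml.
rewrite exchange_big /=; apply: eq_bigr => k _.
rewrite /gs mulr_sumr (reindex_inj (mulIf (invr_neq0 nb))) /=.
apply: eq_big => [z|z nz]; first by rewrite mulf_eq0 invr_eq0 (negbTE nb) orbF.
have nz' : z != 0 by move: nz; rewrite mulf_eq0 invr_eq0 (negbTE nb) orbF.
rewrite chiM ?invr_eq0 // chiV // invfM invrK [b * _]mulrC divfK //.
by rewrite mulrAC mulrC.
Qed.

Lemma gs0 : gs 0 = -1.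
Proof.
rewrite /gs; under eq_bigr do rewrite /chi mul0n expr0 invr1 mul1r.
have := sum_psi_nz 1; rewrite oner_eq0 sub0r => <-.
by apply: eq_bigr => s _; rewrite mulr1.
Qed.

Lemma norm1_inv (z : C) : `|z| = 1 -> z^-1 = z^*.
Proof. by move=> H; rewrite invC_norm H expr1n invr1 mul1r. Qed.

Lemma psiN_inv x : psi (- x) = (psi x)^-1.
Proof.
apply: (mulfI (psi_neq0 x)); rewrite -psiD subrr psi0 divff //; exact: psi_neq0.
Qed.

Lemma sum_chiV k : ~~ (m %| k)%N -> \sum_(t | t != 0) (chi k t)^-1 = 0.
Proof.
move=> nk.
rewrite (eq_bigr (fun t => chi k t^-1)); last by move=> t nt; rewrite chiV.
rewrite (reindex_inj invr_inj) /=.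
rewrite (eq_big (fun t => t != 0) (fun t => chi k t)) => [|t|t _]; last by rewrite invrK.
  by rewrite sum_chi (negbTE nk).
by rewrite invr_eq0.
Qed.

Lemma gs_norm2 k : ~~ (m %| k)%N -> `|gs k| ^+ 2 = q%:R.
Proof.
move=> nk; rewrite normCK.
have -> : (gs k)^* = \sum_(v | v != 0) chi k v * psi (- v).
  rewrite /gs rmorph_sum; apply: eq_bigr => v nv; rewrite rmorphM /=.
  have h1 : `|(chi k v)^-1| = 1 by rewrite normfV chi_norm invr1.
  by rewrite -(norm1_inv h1) invrK -(norm1_inv (psiN _)) psiN_inv.
rewrite mulr_suml.
under eq_bigr => z nz do rewrite mulr_sumr.
rewrite exchange_big /=.
have E v : v != 0 -> \sum_(z | z != 0) (chi k z)^-1 * psi z * (chi k v * psi (- v))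
    = \sum_(t | t != 0) (chi k t)^-1 * psi (v * (t - 1)).
  move=> nv; rewrite (reindex_inj (mulIf nv)) /=.
  apply: eq_big => [t|t nt]; first by rewrite mulf_eq0 (negbTE nv) orbF.
  have nt' : t != 0 by move: nt; rewrite mulf_eq0 (negbTE nv) orbF.
  rewrite chiM // invfM mulrACA divfK ?chi_neq0 // -psiD.
  by rewrite mulrBr mulr1 [v * t]mulrC.
under eq_bigr => v nv do rewrite (E v nv).
rewrite exchange_big /=.
under eq_bigr => t nt do rewrite -mulr_sumr sum_psi_nz subr_eq0.
rewrite (bigD1 1) ?oner_eq0 //= eqxx chi1 invr1 mul1r.
rewrite (eq_bigr (fun t => - (chi k t)^-1)); last first.
  by move=> t /andP[_ t1]; rewrite (negbTE t1) sub0r mulrN1.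
rewrite sumrN.
have := sum_chiV nk; rewrite (bigD1 1) ?oner_eq0 //= chi1 invr1 => /eqP.
by rewrite addrC addr_eq0 => /eqP ->; rewrite opprK subrK.
Qed.

Lemma prod_sum n (J : finType) (P : 'I_n -> pred J) (h : 'I_n -> J -> C) :
  \prod_i \sum_(j | P i j) h i j =
  \sum_(f : {ffun 'I_n -> J} | [forall i, P i (f i)]) \prod_i h i (f i).
Proof.
under eq_bigr => i _ do rewrite big_mkcond /=.
rewrite bigA_distr_bigA /= [RHS]big_mkcond /=; apply: eq_bigr => f _.
case: ifP => [/forallP H|/negbT]; first by apply: eq_bigr => i _; rewrite H.
by rewrite negb_forall => /existsP[i Hi]; rewrite (bigD1 i) //= (negbTE Hi) mul0r.
Qed.

Lemma q_neq0 : (q%:R : C) != 0.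
Proof. by rewrite pnatr_eq0 -lt0n (ltnW q_gt1). Qed.

Lemma indicator (c : F) : ((c == 0)%:R : C) = q%:R^-1 * \sum_s psi (s * c).
Proof.
rewrite sum_psiM; case: eqP => _; last by rewrite mulr0.
by rewrite mulVf // q_neq0.
Qed.

Variables (n : nat) (d : 'I_n -> nat) (a : 'I_n -> F).
Hypothesis ha : forall i, a i != 0.

Lemma Nformula : ((Nstar0 d a)%:R : C) = q%:R^-1 * (m%:R ^+ n +
  \sum_(k : {ffun 'I_n -> 'I_m} | [forall i, (m %| k i * d i)%N])
     (if (m %| \sum_i (k i : nat))%N then m%:R else 0) * \prod_i (chi (k i) (a i) * gs (k i))).
Proof.
have -> : ((Nstar0 d a)%:R : C) = \sum_(x : {ffun 'I_n -> F} | [forall i, x i != 0])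
     ((\sum_i a i * x i ^+ d i == 0)%:R).
  rewrite /Nstar0 -sumr_const big_mkcond [RHS]big_mkcond /=; apply: eq_bigr => x _.
  by rewrite !inE; case: ([forall i, x i != 0]); case: (_ == 0).
under eq_bigr => x _ do rewrite indicator.
rewrite -mulr_sumr; congr (_ * _).
under eq_bigr => x _ do under eq_bigr => s _ do
  rewrite mulr_sumr (big_morph psi psiD psi0).
rewrite exchange_big /=.
under eq_bigr => s _ do rewrite -(prod_sum (fun i (y : F) => y != 0)
   (fun i y => psi (s * (a i * y ^+ d i)))).
rewrite (bigD1 0) //=; congr (_ + _).
  under eq_bigr => i _ do under eq_bigr => y _ do rewrite mul0r psi0.
  rewrite (eq_bigr (fun=> m%:R)); first by rewrite prodr_const card_ord.
  by move=> i _; rewrite sumr_const cardC1.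
have E s : s != 0 -> \prod_i \sum_(y | y != 0) psi (s * (a i * y ^+ d i)) =
   \sum_(k : {ffun 'I_n -> 'I_m} | [forall i, (m %| k i * d i)%N])
      chi (\sum_i (k i : nat)) s * \prod_i (chi (k i) (a i) * gs (k i)).
  move=> ns.
  under eq_bigr => i _ do under eq_bigr => y _ do rewrite mulrA.
  under eq_bigr => i _ do rewrite Gsum ?mulf_neq0 //.
  rewrite (prod_sum (fun i (k : 'I_m) => (m %| k * d i)%N) (fun i k => chi k (s * a i) * gs k)).
  apply: eq_bigr => k _; rewrite -chi_prod -big_split /=; apply: eq_bigr => i _.
  by rewrite chiM // mulrA.
under eq_bigr => s ns do rewrite (E s ns).
rewrite exchange_big /=; apply: eq_bigr => k _.
by rewrite -mulr_suml sum_chi.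
Qed.

Lemma gs_norm (r : C) : 0 <= r -> r ^+ 2 = q%:R -> forall k : 'I_m,
  `|gs k| = if (k : nat) == 0%N then 1 else r.
Proof.
move=> r0 rq k; case: eqP => [->|k0]; first by rewrite gs0 normrN normr1.
have nk : ~~ (m %| k)%N.
  apply/negP => /dvdn_leq; rewrite lt0n => /(_ (introN eqP k0)).
  by rewrite leqNgt ltn_ord.
apply/eqP; rewrite -(eqrXn2 (ltn0Sn 1)) ?normr_ge0 //.
by rewrite gs_norm2 // rq.
Qed.

Lemma Nbound (r : C) : 0 <= r -> r ^+ 2 = q%:R ->
  `|(Nstar0 d a)%:R - m%:R ^+ n / q%:R| <=
    m%:R / q%:R * \sum_(k in Aset n m d) r ^+ #|supp n m k|.
Proof.
move=> r0 rq.
rewrite Nformula mulrDr [_^-1 * _ ^+ n]mulrC addrAC subrr add0r.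
rewrite normrM ger0_norm ?invr_ge0 ?ler0n // [m%:R / _]mulrC -mulrA.
apply: ler_wpM2l; first by rewrite invr_ge0 ler0n.
apply: le_trans (ler_norm_sum _ _ _) _.
rewrite mulr_sumr [X in _ <= X]big_mkcond /= [X in X <= _]big_mkcond /=.
apply: ler_sum => k _; rewrite inE.
case: ([forall i, _]) => /=; last by [].
rewrite normrM normr_prod.
have -> : \prod_i `|chi (k i) (a i) * gs (k i)| = r ^+ #|supp n m k|.
  under eq_bigr => i _ do rewrite normrM chi_norm mul1r (gs_norm r0 rq).
  rewrite (bigID (fun i => i \in supp n m k)) /=.
  rewrite (eq_bigr (fun=> r)); last by move=> i; rewrite inE => /negbTE ->.
  by rewrite prodr_const big1 ?mulr1 // => i; rewrite inE negbK => ->.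
case: ifP => _; last by rewrite normr0 mul0r.
by rewrite normr_nat.
Qed.
End Chars.

Unset Implicit Arguments.

Section NormC.
Local Open Scope complex_scope.
Lemma normC_real (R : rcfType) (x : R) : `|x%:C| = (`|x|)%:C.
Proof. by rewrite normc_def /= expr0n /= addr0 sqrtr_sqr. Qed.

End NormC.

Theorem mainTheorem9 (F : finFieldType) (R : rcfType) (n : nat)
    (d : 'I_n -> nat) (a : 'I_n -> F)
    (hd : forall i, (0 < d i)%N) (ha : forall i, a i != 0) :
  let q : R := (#|F|)%:R in
  `| (Nstar0 d a)%:R - (q - 1) ^+ n / q |
    <= (q - 1) / q
       + \sum_(e < n) \sum_(S : {set 'I_n} | #|S| == (n - e)%N)
           (lcount d S)%:R * ((q - 1) * (Num.sqrt q) ^+ (n - e) / q).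
Proof.
Open Scope complex_scope.
cbv zeta. set q := (#|F|%:R : R).
set m := #|F|.-1.
have hm : (0 < m)%N by exact: m_gt0.
have mq : (m%:R : R) = q - 1 by rewrite /m -subn1 natrB // ltnW // q_gt1.
have [psi [psiD [psi1 psiN]]] := psi_ex F (R[i]).
have [w pw] := @C_prim_root_ex (R[i]) m hm.
have [g pg] := fin_prim_root F.
set s := Num.sqrt q.
have s0 : 0 <= s by exact: sqrtr_ge0.
have r0 : 0 <= s%:C by rewrite ler0c.
have rq : s%:C ^+ 2 = #|F|%:R.
  by rewrite -rmorphXn /s sqr_sqrtr ?ler0n // rmorph_nat.
have H := Nbound psiD psi1 psiN pw pg d ha r0 rq.
have eL : (((Nstar0 d a)%:R - m%:R ^+ n / q : R)%:C) =
   (Nstar0 d a)%:R - m%:R ^+ n / #|F|%:R.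
  by rewrite rmorphB rmorphM rmorphXn fmorphV !rmorph_nat.
have eR : ((m%:R / q * \sum_(k in Aset n m d) s ^+ #|supp n m k| : R)%:C) =
   m%:R / #|F|%:R * \sum_(k in Aset n m d) s%:C ^+ #|supp n m k|.
  rewrite rmorphM rmorphM fmorphV !rmorph_nat rmorph_sum.
  by congr (_ * _); apply: eq_bigr => k _; rewrite rmorphXn.
rewrite -eL -eR normC_real lecR in H.
rewrite -mq; apply: (le_trans H).
have qge : 0 <= (m%:R : R) / q by rewrite divr_ge0 ?ler0n.
apply: le_trans (ler_wpM2l qge (@comb_bound n m hm d hd R s s0)) _.
rewrite mulrDr mulr1 lerD2l mulr_sumr; apply: ler_sum => e _.
rewrite mulr_sumr; apply: ler_sum => S _.
by rewrite le_eqVlt; apply/orP; left; apply/eqP; ring.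
Qed.
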